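(* Let $(L,\mathcal P)$, $\mathcal P=(P_n)_{n\in\mathbb{N}}$, be an $x$–$y$ grain line in a graph $G$, let $\ell_1,\ell_2\in L$ with $\ell_1<_L\ell_2$, and let $N\in\mathbb{N}$ be such that $P_N$ grains $\{\ell_1,\ell_2\}$. Then $([\ell_1,\ell_2]_L,(\ell_1P_n\ell_2)_{n\ge N})$, with $[\ell_1,\ell_2]_L$ carrying the restriction of $\le_L$, is an $\ell_1$–$\ell_2$ grain line in $G$; moreover, it is wildly presented if $(L,\mathcal P)$ is wildly presented.
   Context: Graphs are simple and may be infinite; $\mathbb{N}=\{0,1,2,\dots\}$. An $a$–$b$ path $P$ induces the linear order $\le_P$ of traversal from $a$ to $b$ on $V(P)$; for vertices $s,t$ on $P$, $sPt$ denotes the subpath of $P$ between them. For distinct vertices $a,b$ and $M\in\mathbb{N}$, an $a$–$b$ grain line in $G$ (indexed from $M$) is a pair $(L,\mathcal P)$ where $L\subseteq V(G)$ is a countable set with a linear order $\le_L$ having least element $a$ and greatest element $b$, and $\mathcal P=(P_n)_{n\ge M}$ is a sequence of pairwise edge-disjoint $a$–$b$ paths in $G$, such that: (GL1) $L$ is exactly the set of vertices $v$ for which $\{n\ge M: v\in V(P_n)\}$ is a non-empty final segment $\{n:n\ge m\}$ of $\{n\in\mathbb{N}:n\ge M\}$; (GL2) if a vertex of $P_n$ is not in $L$, it lies on no $P_m$ with $m\ne n$; (GL3) for every $n\ge M$, $\le_{P_n}$ and $\le_L$ induce the same linear order on $L_{<n}:=L\cap\bigcup_{M\le k<n}V(P_k)$.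 Interval notation: $[\ell,\ell']_L=\{\ell''\in L:\ell\le_L\ell''\le_L\ell'\}$, $(\ell,\ell')_L$ the corresponding open interval. A path $P_n$ grains a vertex set $U$ if for every $m\ge n$ we have $V(P_m)\cap U=L\cap U$ and $\le_{P_m}$ and $\le_L$ induce the same linear order on this set. A grain line is wildly presented if for every $n$ and all $\ell<_L\ell'$ in $L_{<n}$, the subpath $\ell P_n\ell'$ has a vertex in $(\ell,\ell')_L$. *)

(* Defs.v *)
From Stdlib Require Import List Arith Lia.
Import ListNotations.

Record graph := Graph {
  vtx : Type;
  adj : vtx -> vtx -> Prop;
  adj_sym : forall u v, adj u v -> adj v u;
  adj_irrefl : forall v, ~ adj v v
}.

Section Defs.
Variable G : graph.
Notation V := (vtx G).

Definition first (p : list V) : option V := hd_error p.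
Definition final (p : list V) : option V := hd_error (rev p).

Definition is_path (p : list V) : Prop :=
  p <> [] /\ NoDup p /\
  forall i u v, nth_error p i = Some u -> nth_error p (S i) = Some v -> adj G u v.

Definition is_ab_path (a b : V) (p : list V) : Prop :=
  is_path p /\ first p = Some a /\ final p = Some b.

Definition has_edge (p : list V) (u v : V) : Prop :=
  exists i, (nth_error p i = Some u /\ nth_error p (S i) = Some v) \/
            (nth_error p i = Some v /\ nth_error p (S i) = Some u).

Definition edge_disjoint (p q : list V) : Prop :=
  forall u v, ~ (has_edge p u v /\ has_edge q u v).

Definition leP (p : list V) (u v : V) : Prop :=
  exists i j, nth_error p i = Some u /\ nth_error p j = Some v /\ i <= j.

(* q is the subpath sPt of p, traversed from s to t *)
Definition is_subpath (p : list V) (s t : V) (q : list V) : Prop :=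
  exists l1 q' l2, p = l1 ++ q' ++ l2 /\ (q = q' \/ q = rev q') /\
    first q = Some s /\ final q = Some t.

Definition linear_order_on (L : V -> Prop) (le : V -> V -> Prop) : Prop :=
  (forall u, L u -> le u u) /\
  (forall u v, L u -> L v -> le u v -> le v u -> u = v) /\
  (forall u v w, L u -> L v -> L w -> le u v -> le v w -> le u w) /\
  (forall u v, L u -> L v -> le u v \/ le v u).

Definition ltL (le : V -> V -> Prop) (u v : V) : Prop := le u v /\ u <> v.

Definition countable_set (L : V -> Prop) : Prop :=
  exists f : V -> nat, forall u v, L u -> L v -> f u = f v -> u = v.

Definition L_below (M : nat) (L : V -> Prop) (P : nat -> list V) (n : nat) (v : V) : Prop :=
  L v /\ exists k, M <= k /\ k < n /\ In v (P k).

Definition grain_line (M : nat) (a b : V) (L : V -> Prop) (le : V -> V -> Prop)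
    (P : nat -> list V) : Prop :=
  a <> b /\
  countable_set L /\
  linear_order_on L le /\
  L a /\ L b /\
  (forall v, L v -> le a v) /\ (forall v, L v -> le v b) /\
  (forall n, M <= n -> is_ab_path a b (P n)) /\
  (forall n m, M <= n -> M <= m -> n <> m -> edge_disjoint (P n) (P m)) /\
  (forall v, L v <-> exists m, M <= m /\ forall n, M <= n -> (In v (P n) <-> m <= n)) /\
  (forall n v, M <= n -> In v (P n) -> ~ L v ->
     forall m, M <= m -> m <> n -> ~ In v (P m)) /\
  (forall n, M <= n -> forall u v, L_below M L P n u -> L_below M L P n v ->
     (leP (P n) u v <-> le u v)).

Definition grains (L : V -> Prop) (le : V -> V -> Prop) (P : nat -> list V)
    (n : nat) (U : V -> Prop) : Prop :=
  forall m, n <= m ->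
    (forall v, U v -> (In v (P m) <-> L v)) /\
    (forall u v, U u -> U v -> L u -> L v -> (leP (P m) u v <-> le u v)).

Definition wildly_presented (M : nat) (L : V -> Prop) (le : V -> V -> Prop)
    (P : nat -> list V) : Prop :=
  forall n, M <= n -> forall l l', L_below M L P n l -> L_below M L P n l' ->
    ltL le l l' ->
    forall q, is_subpath (P n) l l' q ->
      exists w, In w q /\ L w /\ ltL le l w /\ ltL le w l'.

End Defs.

(* Main.v *)
Require Import Defs.
From Stdlib Require Import List Arith.
From Stdlib Require Import Lia Classical.
Import ListNotations.

Section Aux.
Variable G : graph.
Notation V := (vtx G).

Lemma nth_mid (A q B : list V) k x : nth_error q k = Some x ->
  nth_error (A++q++B) (length A + k) = Some x.
Proof. intros H. rewrite nth_error_app2 by lia.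
  replace (length A + k - length A) with k by lia. rewrite nth_error_app1. exact H.
  apply nth_error_Some. congruence. Qed.

Lemma nth_mid_inv (A q B : list V) i x : length A <= i -> i < length A + length q ->
  nth_error (A++q++B) i = Some x -> nth_error q (i - length A) = Some x.
Proof. intros H1 H2 H. rewrite nth_error_app2 in H by lia.
  rewrite nth_error_app1 in H by lia. exact H. Qed.

Lemma nodup_idx (p : list V) i j x : NoDup p -> nth_error p i = Some x ->
  nth_error p j = Some x -> i = j.
Proof. intros Hn Hi Hj. apply (proj1 (NoDup_nth_error p) Hn).
  apply nth_error_Some; congruence. congruence. Qed.

Lemma leP_antisym p u v : NoDup p -> leP G p u v -> leP G p v u -> u = v.
Proof. intros Hn [i [j [Hi [Hj Hij]]]] [j' [i' [Hj' [Hi' Hji]]]].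
  assert (i = i') by (eapply nodup_idx; eauto).
  assert (j = j') by (eapply nodup_idx; eauto). subst.
  assert (i' = j') by lia. subst. congruence. Qed.

Lemma first_cons (q : list V) a : first G q = Some a -> exists q0, q = a :: q0.
Proof. unfold first. destruct q; simpl; intros H; [discriminate|].
  injection H as ->; eauto. Qed.

Lemma final_snoc (q : list V) b : final G q = Some b -> exists q1, q = q1 ++ [b].
Proof. unfold final. intros H. destruct (rev q) eqn:E; simpl in H; [discriminate|].
  injection H as ->. exists (rev l). rewrite <- (rev_involutive q), E. simpl. reflexivity. Qed.

Lemma seg_mem A q B a b v : NoDup (A++q++B) -> first G q = Some a -> final G q = Some b ->
  (In v q <-> leP G (A++q++B) a v /\ leP G (A++q++B) v b).
Proof.
  intros Hn Ha Hb. destruct (first_cons _ _ Ha) as [q0 Eq0].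
  destruct (final_snoc _ _ Hb) as [q1 Eq1].
  assert (Hlen : length q = S (length q1)) by (rewrite Eq1, length_app; simpl; lia).
  assert (HA : nth_error (A++q++B) (length A) = Some a).
  { replace (length A) with (length A + 0) by lia. apply nth_mid. rewrite Eq0. reflexivity. }
  assert (HB : nth_error (A++q++B) (length A + length q1) = Some b).
  { apply nth_mid. rewrite Eq1. rewrite nth_error_app2 by lia. rewrite Nat.sub_diag. reflexivity. }
  split.
  - intros Hv. destruct (In_nth_error _ _ Hv) as [k Hk].
    assert (k < length q) by (apply nth_error_Some; congruence).
    pose proof (nth_mid A q B _ _ Hk).
    split; [exists (length A), (length A + k) | exists (length A + k), (length A + length q1)];
      repeat split; auto; lia.
  - intros [[i [j [Hi [Hj Hij]]]] [j' [i' [Hj' [Hi' Hji]]]]].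
    assert (i = length A) by (eapply nodup_idx; eauto).
    assert (i' = length A + length q1) by (eapply nodup_idx; eauto).
    assert (j = j') by (eapply nodup_idx; eauto). subst.
    apply nth_error_In with (n := j' - length A). apply nth_mid_inv with B; auto; lia.
Qed.

Lemma seg_le A q B u v : NoDup (A++q++B) -> In u q -> In v q ->
  (leP G q u v <-> leP G (A++q++B) u v).
Proof. intros Hn Hu Hv. split.
  - intros [i [j [Hi [Hj Hij]]]]. exists (length A + i), (length A + j).
    repeat split; try apply nth_mid; auto; lia.
  - intros [i [j [Hi [Hj Hij]]]]. destruct (In_nth_error _ _ Hu) as [k Hk].
    destruct (In_nth_error _ _ Hv) as [k' Hk'].
    pose proof (nth_mid A q B _ _ Hk). pose proof (nth_mid A q B _ _ Hk').
    assert (i = length A + k) by (eapply nodup_idx; eauto).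
    assert (j = length A + k') by (eapply nodup_idx; eauto).
    exists k, k'. repeat split; auto; lia.
Qed.

Lemma sub_path A q B : is_path G (A++q++B) -> q <> [] -> is_path G q.
Proof. intros [Hne [Hn Hadj]] Hq. split; [auto|split].
  - apply NoDup_app_remove_l in Hn. apply NoDup_app_remove_r in Hn. exact Hn.
  - intros i u v Hu Hv. eapply Hadj; [apply (nth_mid A q B _ _ Hu)|].
    rewrite <- Nat.add_succ_r. apply nth_mid; auto.
Qed.

Lemma sub_edge A q B u v : has_edge G q u v -> has_edge G (A++q++B) u v.
Proof. intros [i [[H1 H2]|[H1 H2]]]; exists (length A + i); [left|right];
  (split; [apply nth_mid; auto | rewrite <- Nat.add_succ_r; apply nth_mid; auto]). Qed.

End Aux.

Lemma upclosed_min (Pp : nat -> Prop) K : (forall n, Pp n -> Pp (S n)) -> Pp K ->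
  exists m, forall n, Pp n <-> m <= n.
Proof. intros Hup. induction K as [|K IH]; intros HK.
  - exists 0. intros n; split; [lia|]. intros _. induction n; auto.
  - destruct (classic (Pp K)) as [H|H]; [apply IH; auto|]. exists (S K). intros n; split.
    + intros Hn. destruct (le_lt_dec (S K) n); auto. exfalso. apply H.
      assert (forall d, Pp (n + d)).
      { induction d; [rewrite Nat.add_0_r; auto | rewrite Nat.add_succ_r; auto]. }
      replace K with (n + (K - n)) by lia. auto.
    + intros Hn. assert (forall d, Pp (S K + d)).
      { induction d; [rewrite Nat.add_0_r; auto | rewrite Nat.add_succ_r; auto]. }
      replace n with (S K + (n - S K)) by lia. auto.
Qed.

Theorem lemma5p6 (G : graph) (x y : vtx G) (L : vtx G -> Prop)
  (le : vtx G -> vtx G -> Prop) (P : nat -> list (vtx G))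
  (l1 l2 : vtx G) (N : nat) (Q : nat -> list (vtx G)) :
  grain_line G 0 x y L le P ->
  L l1 -> L l2 -> ltL G le l1 l2 ->
  grains G L le P N (fun v => v = l1 \/ v = l2) ->
  (forall n, N <= n -> is_subpath G (P n) l1 l2 (Q n)) ->
  grain_line G N l1 l2 (fun v => L v /\ le l1 v /\ le v l2) le Q /\
  (wildly_presented G 0 L le P ->
   wildly_presented G N (fun v => L v /\ le l1 v /\ le v l2) le Q).
Proof.
  intros HGL HL1 HL2 Hlt Hgr HQ.
  destruct HGL as [Hxy [Hcount [Hlin [HLx [HLy [Hbx [Hby [Hpath [Hdisj [HGL1 [HGL2 HGL3]]]]]]]]]]].
  destruct Hlin as [Hrefl [Hanti [Htrans Htot]]].
  destruct Hlt as [Hle12 Hne12].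
  assert (Hin12 : forall m, N <= m -> In l1 (P m) /\ In l2 (P m)).
  { intros m Hm. destruct (Hgr m Hm) as [H1 _]. split; apply H1; auto. }
  assert (Hord12 : forall m, N <= m -> leP G (P m) l1 l2).
  { intros m Hm. destruct (Hgr m Hm) as [_ H2]. apply H2; auto. }
  assert (Hnd : forall n, NoDup (P n)).
  { intros n. destruct (Hpath n ltac:(lia)) as [[_ [H _]] _]. exact H. }
  assert (Hdec : forall n, N <= n -> exists A B, P n = A ++ Q n ++ B /\
            first G (Q n) = Some l1 /\ final G (Q n) = Some l2).
  { intros n Hn. destruct (HQ n Hn) as [A [q' [B [HP [[Eq|Eq] [Hf1 Hf2]]]]]].
    - subst q'. exists A, B. auto.
    - exfalso. rewrite Eq in Hf1, Hf2.
      assert (F1 : first G q' = Some l2).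
      { unfold final in Hf2. rewrite rev_involutive in Hf2. exact Hf2. }
      assert (F2 : final G q' = Some l1) by (unfold final, first in *; exact Hf1).
      pose proof (Hnd n) as Hn'. rewrite HP in Hn'.
      assert (Hin : In l1 q').
      { destruct (final_snoc _ _ _ F2) as [q1 ->]. apply in_or_app; right; left; auto. }
      destruct (proj1 (seg_mem G A q' B l2 l1 l1 Hn' F1 F2) Hin) as [H _].
      apply Hne12. apply (leP_antisym G (P n)); [apply Hnd | apply Hord12; exact Hn | rewrite HP; exact H]. }
  assert (HmemQ : forall n v, N <= n ->
     (In v (Q n) <-> In v (P n) /\ leP G (P n) l1 v /\ leP G (P n) v l2)).
  { intros n v Hn. destruct (Hdec n Hn) as [A [B [HP [Hf1 Hf2]]]].
    pose proof (Hnd n) as Hn'. rewrite HP in Hn' |- *.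
    rewrite <- (seg_mem G A (Q n) B l1 l2 v Hn' Hf1 Hf2).
    split; [intros H; split; auto; apply in_or_app; right; apply in_or_app; left; auto | tauto]. }
  assert (HPup : forall v j k, L v -> In v (P j) -> j <= k -> In v (P k)).
  { intros v j k Hv Hj Hjk. destruct (proj1 (HGL1 v) Hv) as [m [_ Hm]].
    apply (Hm k ltac:(lia)). apply (Hm j ltac:(lia)) in Hj. lia. }
  assert (HB : forall v j k, L v -> In v (P j) -> N <= j -> j < k ->
            (In v (Q k) <-> le l1 v /\ le v l2)).
  { intros v j k Hv Hj HNj Hjk.
    assert (Hbv : L_below G 0 L P k v) by (split; auto; exists j; repeat split; auto; lia).
    assert (Hb1 : L_below G 0 L P k l1)
      by (split; auto; exists N; repeat split; [lia|lia|apply Hin12; lia]).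
    assert (Hb2 : L_below G 0 L P k l2)
      by (split; auto; exists N; repeat split; [lia|lia|apply Hin12; lia]).
    rewrite (HmemQ k v ltac:(lia)). rewrite (HGL3 k ltac:(lia) l1 v Hb1 Hbv).
    rewrite (HGL3 k ltac:(lia) v l2 Hbv Hb2). split; [tauto|].
    intros H; split; [eapply HPup; eauto; lia | exact H]. }
  assert (HC : forall v, L v -> exists j, N <= j /\ In v (P j)).
  { intros v Hv. destruct (proj1 (HGL1 v) Hv) as [m [_ Hm]]. exists (Nat.max m N).
    split; [lia|]. apply Hm; lia. }
  assert (HQP : forall n v, N <= n -> In v (Q n) -> In v (P n))
    by (intros n v Hn H; apply (HmemQ n v Hn) in H; tauto).
  split.
  - split; [exact Hne12|]. split.
    { destruct Hcount as [f Hf]; exists f; intros u v Hu Hv; apply Hf; tauto. }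
    split.
    { split; [intros u Hu; apply Hrefl; tauto | split;
      [intros u v Hu Hv; apply Hanti; tauto | split;
      [intros u v w Hu Hv Hw; apply Htrans; tauto | intros u v Hu Hv; apply Htot; tauto]]]. }
    split; [repeat split; auto|].
    split; [repeat split; auto|].
    split; [intros v Hv; tauto|].
    split; [intros v Hv; tauto|].
    split.
    { intros n Hn. destruct (Hdec n Hn) as [A [B [HP [Hf1 Hf2]]]]. split; [|auto].
      destruct (Hpath n ltac:(lia)) as [Hp _]. rewrite HP in Hp.
      apply (sub_path G A _ B Hp). intros E; rewrite E in Hf1; discriminate. }
    split.
    { intros n m Hn Hm Hnm u v [H1 H2]. destruct (Hdec n Hn) as [A [B [HP _]]].
      destruct (Hdec m Hm) as [A' [B' [HP' _]]].
      apply (Hdisj n m ltac:(lia) ltac:(lia) Hnm u v).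
      split; [rewrite HP | rewrite HP']; apply sub_edge; auto. }
    split.
    { intros v; split.
      - intros [Hv [H1 H2]]. destruct (HC v Hv) as [j [Hj HPj]].
        destruct (upclosed_min (fun n => N <= n /\ In v (Q n)) (S j)) as [m Hm].
        { intros n [Hn Hq]. split; [lia|].
          apply (proj2 (HB v n (S n) Hv (HQP n v Hn Hq) Hn ltac:(lia))); auto. }
        { split; [lia|]. apply (proj2 (HB v j (S j) Hv HPj Hj ltac:(lia))); auto. }
        exists m. split; [apply (proj2 (Hm m) (le_n m))|].
        intros n Hn. rewrite <- (Hm n). tauto.
      - intros [m [HmN Hm]]. set (n0 := Nat.max m N).
        assert (Q0 : In v (Q n0)) by (apply Hm; lia).
        assert (Q1 : In v (Q (S n0))) by (apply Hm; lia).
        assert (Hv : L v).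
        { apply NNPP. intros Hv.
          apply (HGL2 n0 v ltac:(lia) (HQP n0 v ltac:(lia) Q0) Hv (S n0) ltac:(lia) ltac:(lia)).
          apply HQP; auto; lia. }
        split; auto. apply (HB v n0 (S n0) Hv (HQP n0 v ltac:(lia) Q0) ltac:(lia) ltac:(lia)).
        auto. }
    split.
    { intros n v Hn Hq Hnot m Hm Hmn Hqm.
      destruct (classic (L v)) as [Hv|Hv].
      - apply Hnot. split; auto. destruct (lt_dec n m) as [l|l].
        + apply (HB v n m Hv (HQP _ _ Hn Hq) Hn l). exact Hqm.
        + apply (HB v m n Hv (HQP _ _ Hm Hqm) Hm ltac:(lia)). exact Hq.
      - apply (HGL2 n v ltac:(lia) (HQP _ _ Hn Hq) Hv m ltac:(lia) Hmn (HQP _ _ Hm Hqm)). }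
    { intros n Hn u v [Hu [k [Hk1 [Hk2 Hku]]]] [Hv [k' [Hk1' [Hk2' Hkv]]]].
      destruct (Hdec n Hn) as [A [B [HP _]]].
      assert (HuQ : In u (Q n))
        by (apply (HB u k n (proj1 Hu) (HQP _ _ Hk1 Hku) Hk1 Hk2); tauto).
      assert (HvQ : In v (Q n))
        by (apply (HB v k' n (proj1 Hv) (HQP _ _ Hk1' Hkv) Hk1' Hk2'); tauto).
      pose proof (Hnd n) as Hn'. rewrite HP in Hn'.
      rewrite (seg_le G A (Q n) B u v Hn' HuQ HvQ). rewrite <- HP.
      apply HGL3; [lia | split; [tauto| exists k; split; [lia | split; [lia | apply HQP; auto]]]
                       | split; [tauto| exists k'; split; [lia | split; [lia | apply HQP; auto]]]]. }
  - intros Hw n Hn l l' [Hl [k [Hk1 [Hk2 Hkl]]]] [Hl' [k' [Hk1' [Hk2' Hkl']]]] Hll' q Hq.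
    destruct (Hdec n Hn) as [A [B [HP _]]].
    destruct Hq as [A2 [q' [B2 [HQn [Hqq [Hf1 Hf2]]]]]].
    assert (Hsub : is_subpath G (P n) l l' q).
    { exists (A ++ A2), q', (B2 ++ B). split; auto. rewrite HP, HQn.
      rewrite <- !app_assoc. reflexivity. }
    assert (Hbl : L_below G 0 L P n l)
      by (split; [tauto | exists k; split; [lia | split; [lia | apply HQP; auto]]]).
    assert (Hbl' : L_below G 0 L P n l')
      by (split; [tauto | exists k'; split; [lia | split; [lia | apply HQP; auto]]]).
    destruct (Hw n ltac:(lia) l l' Hbl Hbl' Hll' q Hsub)
      as [w [Hwq [HLw [[Hlw Hlw'] [Hwl' Hwl'n]]]]].
    exists w. split; auto.
    split; [split; [auto | split] | split; split; auto].
    + apply (Htrans l1 l w); tauto.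
    + apply (Htrans w l' l2); tauto.
Qed.
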